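(* Let $C(17)$ be the Pless symmetry code of length $36$ and $U$ the set of its codewords of weight $36$, viewed as $\pm1$ vectors by replacing each entry $2$ with $-1$. If $H$ is a Hadamard matrix of order $36$ whose rows are codewords from $U$, then the row set of any normalized Hadamard matrix obtained from $H$ (by negating rows and columns of $H$) is contained in a ternary code which is monomially equivalent to $C(17)$.
   Context: Let $\chi$ be the quadratic character of $GF(17)$ ($\chi(0)=0$, $\chi(a)=1$ for nonzero squares, $-1$ otherwise), $Q$ the $17\times17$ matrix with $Q_{ij}=\chi(j-i)$, and $S_{18}=\begin{pmatrix}0&\mathbf 1^T\\ \mathbf 1& Q\end{pmatrix}$ read over $GF(3)$. The Pless symmetry code $C(17)$ is the ternary code of length $36$ generated by $[I_{18}\mid S_{18}]$. A Hadamard matrix is normalized if all entries of its first row and first column equal $1$; a $\pm1$ vector is identified with a ternary vector via $-1\mapsto 2$, so negating a row corresponds to multiplying the codeword by $2$. Two ternary codes are monomially equivalent if one is obtained from the other by a permutation of coordinates followed by multiplying some coordinates by $2$. *)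

(* Defs.v *)
From HB Require Import structures.
From mathcomp Require Import all_boot all_order all_algebra all_fingroup.
Set Implicit Arguments. Unset Strict Implicit. Unset Printing Implicit Defensive.
Import GRing.Theory.
Local Open Scope ring_scope.

Definition qchi17 (a : 'F_17) : 'F_3 :=
  if a == 0 then 0 else if [exists b : 'F_17, b * b == a] then 1 else -1.

(* S_18 = [0 1^T; 1 Q], Q_{ij} = chi(j - i); index 0 is the border,
   index k >= 1 corresponds to the element k-1 of GF(17). *)
Definition S18 : 'M['F_3]_18 :=
  \matrix_(i < 18, j < 18)
    if (i == 0 :> nat) && (j == 0 :> nat) then 0
    else if (i == 0 :> nat) || (j == 0 :> nat) then 1
    else qchi17 ((j.-1)%:R - (i.-1)%:R).

Definition G17 : 'M['F_3]_(18, 36) := row_mx 1%:M S18.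

Definition C17 (v : 'rV['F_3]_36) : Prop := (v <= G17)%MS.

Definition U17 (v : 'rV['F_3]_36) : Prop := C17 v /\ [forall j, v 0 j != 0].

Definition to_F3 (v : 'rV[int]_36) : 'rV['F_3]_36 := map_mx (fun z : int => z%:~R) v.

Definition pm1 (z : int) : bool := (z == 1) || (z == -1).

Definition hadamard36 (H : 'M[int]_36) : Prop :=
  (forall i j, pm1 (H i j)) /\ H *m H^T = 36%:M.

Definition normalized36 (H : 'M[int]_36) : Prop :=
  forall k, H 0 k = 1 /\ H k 0 = 1.

Definition negate_rc (r c : 'I_36 -> int) (H : 'M[int]_36) : 'M[int]_36 :=
  \matrix_(i, j) (r i * H i j * c j).

Definition mon_image (s : 'S_36) (d : 'I_36 -> 'F_3) (C : 'rV['F_3]_36 -> Prop)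
  (v : 'rV['F_3]_36) : Prop :=
  exists2 w, C w & v = \row_j (d j * w 0 (s j)).

Definition monomially_equivalent_to (D C : 'rV['F_3]_36 -> Prop) : Prop :=
  exists (s : 'S_36) (d : 'I_36 -> 'F_3),
    (forall j, d j != 0) /\ (forall v, D v <-> mon_image s d C v).

(* Main.v *)
Require Import Defs.
From HB Require Import structures.
From mathcomp Require Import all_boot all_order all_algebra all_fingroup.
Import GRing.Theory.
Local Open Scope ring_scope.

Theorem lemma2 (H : 'M[int]_36) :
  hadamard36 H ->
  (forall i, U17 (to_F3 (row i H))) ->
  forall r c : 'I_36 -> int,
    (forall i, pm1 (r i)) -> (forall j, pm1 (c j)) ->
    normalized36 (negate_rc r c H) ->
    exists D : 'rV['F_3]_36 -> Prop,
      monomially_equivalent_to D C17 /\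
      (forall i, D (to_F3 (row i (negate_rc r c H)))).
Proof.
move=> _ hU r c _ hc _.
pose d := fun j => ((c j)%:~R : 'F_3).
exists (mon_image 1%g d C17); split.
  exists 1%g, d; split => // j.
  by rewrite /d; case/orP: (hc j) => /eqP ->.
move=> i; exists (((r i)%:~R : 'F_3) *: to_F3 (row i H)).
  by case: (hU i) => hC _; rewrite /C17 scalemx_sub.
apply/rowP => j; rewrite /to_F3 !mxE perm1 /d !intrM.
by rewrite mulrC mulrA.
Qed.
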